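(* Let $A$ be a sesquiad. Every congruence $\mathcal C\ne A\times A$ on $A$ is contained in a prime congruence.
   Context: Rings are commutative with $1$; monoids are commutative with $1$ and a zero $0$, morphisms preserving $0,1$. A sesquiad is a monoid $A$ with an addition: partially defined sums $\sum_jk_ja_j$ ($k\in\mathbb Z^n$, $n\ge2$) coming from an injective monoid morphism $\varphi:A\to R$ into a ring with $\varphi(0)=0$, a sum being defined exactly when $\sum_jk_j\varphi(a_j)\in\varphi(A)$ and then equal to its preimage; sesquiad morphisms are monoid morphisms preserving defined sums. A congruence on $A$ is an equivalence relation $\mathcal C\subset A\times A$ such that the quotient monoid $A/\mathcal C$ admits an addition making the projection $A\to A/\mathcal C$ a sesquiad morphism. A sesquiad $B$ is integral if $1\neq0$ and $bf=cf$ implies $b=c$ or $f=0$. A congruence $\mathcal C$ is prime if $A/\mathcal C$ is integral, i.e. $1\not\sim_{\mathcal C}0$ and $(af,bf)\in\mathcal C$ implies $(a,b)\in\mathcal C$ or $(f,0)\in\mathcal C$. *)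

(* Defs.v *)
From HB Require Import structures.
From mathcomp Require Import all_boot all_order all_algebra.
Set Implicit Arguments. Unset Strict Implicit. Unset Printing Implicit Defensive.
Import Order.TTheory GRing.Theory Num.Theory.
Local Open Scope ring_scope.

(* A sesquiad is presented by its underlying commutative monoid
   (A, mul, one, zero) together with an injective monoid morphism
   phi : A -> R into a commutative ring (possibly the zero ring), with
   phi zero = 0.  The (partial) addition of the sesquiad is the one induced
   by phi (see [sesq_sum]). *)
Definition sesquiad_embedding (A : Type) (mul : A -> A -> A) (one zero : A)
    (R : comPzRingType) (phi : A -> R) : Prop :=
  (forall x y z, mul x (mul y z) = mul (mul x y) z) /\
  (forall x y, mul x y = mul y x) /\
  (forall x, mul one x = x) /\
  (forall x, mul zero x = zero) /\
  injective phi /\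
  (forall x y, phi (mul x y) = phi x * phi y) /\
  phi one = 1 /\ phi zero = 0.

(* "sum_j k_j a_j is defined and equals b" for the addition induced by
   phi (n >= 2, k in Z^n). *)
Definition sesq_sum (A : Type) (R : comPzRingType) (phi : A -> R)
    (n : nat) (k : 'I_n -> int) (a : 'I_n -> A) (b : A) : Prop :=
  \sum_(j < n) phi (a j) *~ k j = phi b.

(* C is a congruence on the sesquiad (A, phi): the quotient monoid A/C
   admits an addition (an injective monoid morphism psi : A/C -> R' into a
   commutative ring, psi 0 = 0) making the projection A -> A/C a sesquiad
   morphism.  Without quotient types we express this via f = psi o proj :
   a monoid morphism A -> R' whose kernel pair is exactly C, and which
   carries every defined sum of A to the corresponding (hence defined) sum. *)
Definition sesq_congruence (A : Type) (mul : A -> A -> A) (one zero : A)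
    (R : comPzRingType) (phi : A -> R) (C : A -> A -> Prop) : Prop :=
  [/\ (forall x, C x x),
      (forall x y, C x y -> C y x),
      (forall x y z, C x y -> C y z -> C x z) &
      exists (R' : comPzRingType) (f : A -> R'),
        [/\ (forall x y, C x y <-> f x = f y),
            (forall x y, f (mul x y) = f x * f y),
            f one = 1, f zero = 0 &
            (forall (n : nat) (k : 'I_n -> int) (a : 'I_n -> A) (b : A),
                (2 <= n)%N -> sesq_sum phi k a b -> sesq_sum f k a b)]].

(* C is prime: the quotient A/C is integral. *)
Definition sesq_prime (A : Type) (mul : A -> A -> A) (one zero : A)
    (C : A -> A -> Prop) : Prop :=
  ~ C one zero /\
  (forall a b f, C (mul a f) (mul b f) -> C a b \/ C f zero).

(* Main.v *)
Require Import Defs.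
From HB Require Import structures.
From mathcomp Require Import all_boot all_order all_algebra ring_quotient generic_quotient.
From Stdlib Require Import Classical ClassicalEpsilon FunctionalExtensionality PropExtensionality.
Set Implicit Arguments. Unset Strict Implicit. Unset Printing Implicit Defensive.
Import GRing.Theory.
Section Tower.
Variable U : Type.
Definition sub (X Y : U -> Prop) := forall x, X x -> Y x.
Definition supS (B : U -> Prop) (S : (U -> Prop) -> Prop) : U -> Prop :=
  fun x => B x \/ exists I, S I /\ I x.

Lemma sub_eq X Y : sub X Y -> sub Y X -> X = Y.
Proof.
move=> h1 h2; apply: functional_extensionality => x.
by apply: propositional_extensionality; split; [apply: h1|apply: h2].
Qed.

Variables (g : (U -> Prop) -> (U -> Prop)) (B : U -> Prop).
Hypothesis ginf : forall X, sub X (g X).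

Inductive tower : (U -> Prop) -> Prop :=
| tw_g X : tower X -> tower (g X)
| tw_sup S : (forall I, S I -> tower I) -> tower (supS B S).

Lemma tw_B X : tower X -> sub B X.
Proof.
elim=> [Y _ IH|S _ _] x hx; first by apply: ginf; apply: IH.
by left.
Qed.

Definition extreme c := forall x, tower x -> sub x c -> ~ sub c x -> sub (g x) c.

Lemma L1 c : tower c -> extreme c -> forall x, tower x -> sub x c \/ sub (g c) x.
Proof.
move=> tc ec x; elim=> [y ty IH|S hS IH].
  case: IH => [yc|gcy]; last by right=> z /gcy /ginf.
  case: (classic (sub c y)) => [cy|ncy].
    by rewrite (sub_eq yc cy); right.
  by left; apply: ec.
case: (classic (exists I, S I /\ ~ sub I c)) => [[I [SI nIc]]|hn].
  case: (IH I SI) => // gcI; right=> z /gcI Iz; right; exists I; split.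
  done. done.
left=> z [Bz|[I [SI Iz]]]; first by apply: (tw_B tc).
apply: NNPP => nzc; apply: hn; exists I; split => // Ic; apply: nzc; exact: Ic.
Qed.

Lemma L2 c : tower c -> extreme c.
Proof.
elim=> [y ty ey|S hS IH].
  move=> x tx xgy ngyx.
  case: (L1 ty ey tx) => [xy|gyx]; last by exfalso.
  case: (classic (sub y x)) => [yx|nyx].
    by rewrite (sub_eq xy yx) => z.
  by move=> z /(ey x tx xy nyx) /ginf.
move=> x tx xs nsx.
have [I [SI nIx]] : exists I, S I /\ ~ sub I x.
  apply: NNPP => hn; apply: nsx => z [Bz|[I [SI Iz]]]; first by apply: (tw_B tx).
  apply: NNPP => nzx; apply: hn; exists I; split => // Ix; apply: nzx; exact: Ix.
case: (L1 (hS I SI) (IH I SI) tx) => [xI|gIx].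
  by move=> z /(IH I SI x tx xI nIx) Iz; right; exists I.
by exfalso; apply: nIx => z /ginf /gIx.
Qed.

Lemma tw_chain x y : tower x -> tower y -> sub x y \/ sub y x.
Proof.
move=> tx ty; case: (L1 ty (L2 ty) tx) => [|gyx]; first by left.
by right=> z /ginf /gyx.
Qed.
End Tower.
Lemma zorn (U : Type) (Q : (U -> Prop) -> Prop) (B : U -> Prop) :
  (forall S, (forall I, S I -> Q I) ->
     (forall I J, S I -> S J -> sub I J \/ sub J I) -> Q (supS B S)) ->
  exists M, Q M /\ forall J, Q J -> sub M J -> sub J M.
Proof.
move=> hch; apply: NNPP => hn.
have step : forall M, exists J, sub M J /\ (Q M -> Q J /\ ~ sub J M).
  move=> M; case: (classic (Q M)) => [QM|nQM]; last by exists M; split.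
  have : ~ (forall J, Q J -> sub M J -> sub J M) by move=> h; apply: hn; exists M.
  move=> /not_all_ex_not [J hJ]; exists J.
  case: (classic (Q J)) => QJ; last by exfalso; apply: hJ.
  case: (classic (sub M J)) => MJ; last by exfalso; apply: hJ.
  by split => // _; split => // JM; apply: hJ.
pose g M := proj1_sig (constructive_indefinite_description _ (step M)).
have gP M : sub M (g M) /\ (Q M -> Q (g M) /\ ~ sub (g M) M).
  exact: (proj2_sig (constructive_indefinite_description _ (step M))).
have ginf X : sub X (g X) by case: (gP X).
have TQ X : tower g B X -> Q X.
  elim=> [Y _ QY|S hS IH]; first by case: (gP Y) => _ /(_ QY) [].
  apply: hch => // I J SI SJ; exact: (tw_chain ginf (hS I SI) (hS J SJ)).
have tT : tower g B (supS B (tower g B)) by apply: tw_sup.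
have := gP (supS B (tower g B)) => -[_ /(_ (TQ _ tT)) [_ hns]].
apply: hns => z gz; right; exists (g (supS B (tower g B))); split => //.
exact: tw_g.
Qed.
Local Open Scope ring_scope.
Local Open Scope quotient_scope.
Definition ideal (R : comPzRingType) (I : R -> Prop) :=
  [/\ I 0, forall x y, I x -> I y -> I (x + y) & forall r x, I x -> I (r * x)].

Section Q.
Variables (R : comPzRingType) (M : R -> Prop) (hM : ideal M).

Definition Mb : {pred R} := fun x => if excluded_middle_informative (M x) then true else false.
Lemma MbP x : (x \in Mb) <-> M x.
Proof. rewrite /in_mem /= /Mb; case: excluded_middle_informative => //. Qed.

Lemma Mb_zc : zmod_closed Mb.
Proof.
case: hM => h0 hD hMl; split; first by apply/MbP.
move=> u v /MbP hu /MbP hv; apply/MbP; apply: hD => //.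
by rewrite -mulN1r; apply: hMl.
Qed.
HB.instance Definition _ := GRing.isZmodClosed.Build R Mb Mb_zc.

Local Notation QT := (Quotient.quot Mb).

Definition one : QT := lift_cst QT 1.
Definition mul := lift_op2 QT *%R.
Canonical pi_one_morph := PiConst one.

Lemma Mmul a u : M u -> M (a * u).
Proof. by case: hM => _ _ h; apply: h. Qed.

Lemma pi_mul: {morph \pi_QT : x y / x * y >-> mul x y}.
Proof.
move=> x y; unlock mul; apply/eqP; rewrite piE Quotient.equivE.
rewrite -[_ * _](addrNK (x * repr (\pi_QT y))) -mulrBr.
rewrite -addrA -mulrBl rpredD //; apply/MbP.
  by apply: Mmul; apply/MbP; rewrite Quotient.idealrDE opprK reprK.
by rewrite mulrC; apply: Mmul; apply/MbP; rewrite Quotient.idealrDE opprK reprK.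
Qed.
Canonical pi_mul_morph := PiMorph2 pi_mul.

Lemma mulqA: associative mul.
Proof. by move=> x y z; rewrite -[x]reprK -[y]reprK -[z]reprK !piE mulrA. Qed.
Lemma mulqC: commutative mul.
Proof. by move=> x y; rewrite -[x]reprK -[y]reprK !piE mulrC. Qed.
Lemma mul1q: left_id one mul.
Proof. by move=> x; rewrite -[x]reprK !piE mul1r. Qed.
Lemma mulq_addl: left_distributive mul +%R.
Proof.
move=> x y z; rewrite -[x]reprK -[y]reprK -[z]reprK.
by rewrite !piE mulrDl.
Qed.

Lemma sum_pi n (k : 'I_n -> int) (v : 'I_n -> R) :
  \pi_QT (\sum_(j < n) v j *~ k j) = \sum_(j < n) \pi_QT (v j) *~ k j.
Proof. by rewrite raddf_sum; apply: eq_bigr => j _; rewrite raddfMz. Qed.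

Definition QR := Quotient.quot Mb.
HB.instance Definition _ := GRing.Zmodule.on QR.
HB.instance Definition _ := GRing.Zmodule_isComPzRing.Build QR
  mulqA mulqC mul1q mulq_addl.

Lemma quot_exists : exists (Q : comPzRingType) (pi : R -> Q),
  [/\ forall x y, pi x = pi y <-> M (x - y),
      forall x y, pi (x * y) = pi x * pi y,
      pi 1 = 1, pi 0 = 0 &
      forall n (k : 'I_n -> int) (v : 'I_n -> R),
        pi (\sum_(j < n) v j *~ k j) = \sum_(j < n) pi (v j) *~ k j].
Proof.
exists QR, (\pi_QT : R -> QR); split.
- move=> x y; rewrite -MbP Quotient.idealrBE; split; first by move=> ->.
  by move/eqP.
- move=> x y; exact: pi_mul.
- by rewrite piE.
- exact: (raddf0 \pi_QT).
- move=> n k v; exact: sum_pi.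
Qed.
End Q.

Lemma prime_exists (R : comPzRingType) : (1:R) <> 0 ->
  exists M : R -> Prop, [/\ ideal M, ~ M 1 & forall a b, M (a * b) -> M a \/ M b].
Proof.
move=> h10.
have hch : forall S, (forall I, S I -> ideal I /\ ~ I 1) ->
    (forall I J, S I -> S J -> sub I J \/ sub J I) ->
    ideal (supS (fun x : R => x = 0) S) /\ ~ supS (fun x : R => x = 0) S 1.
  move=> S hS hch.
  split.
  - split.
    + by left.
    + move=> x y [->|[I [SI Ix]]] [->|[J [SJ Jy]]].
      * by left; rewrite addr0.
      * by right; exists J; rewrite add0r.
      * by right; exists I; rewrite addr0.
      * right; case: (hch I J SI SJ) => [IJ|JI].
          exists J; split => //; case: (hS J SJ) => [[_ D _] _]; apply: D => //; exact: IJ.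
        exists I; split => //; case: (hS I SI) => [[_ D _] _]; apply: D => //; exact: JI.
    + move=> r x [->|[I [SI Ix]]]; first by left; rewrite mulr0.
      right; exists I; split => //; case: (hS I SI) => [[_ _ D] _]; exact: D.
  - move=> [E|[I [SI I1]]]; first exact: h10.
    by case: (hS I SI) => _; apply.
have [M [[iM nM1] mx]] := @zorn R (fun I => ideal I /\ ~ I 1) (fun x => x = 0) hch.
  exists M; split => // a b Mab; apply: NNPP => /not_or_and [nMa nMb].
  case: iM => M0 MD MM.
  pose J := fun x => exists m r, M m /\ x = m + r * a.
  have iJ : ideal J.
    split.
    - by exists 0, 0; rewrite mul0r addr0.
    - move=> x y [m1 [r1 [h1 ->]]] [m2 [r2 [h2 ->]]].
      exists (m1 + m2), (r1 + r2); split; first exact: MD.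
      by rewrite mulrDl !addrA [m1 + _ + _]addrAC.
    - move=> s x [m [r [hm ->]]]; exists (s * m), (s * r); split; first exact: MM.
      by rewrite mulrDr mulrA.
  case: (classic (J 1)) => [[m [r [hm E]]]|nJ1].
    apply: nMb.
    have -> : b = b * m + r * (a * b).
      by rewrite mulrA [(r * a) * b]mulrC -mulrDr -E mulr1.
    apply: MD; last exact: MM.
    exact: MM.
  have MJ : sub M J by move=> x hx; exists x, 0; rewrite mul0r addr0.
  apply: nMa; apply: (mx J (conj iJ nJ1) MJ).
  by exists 0, 1; rewrite mul1r add0r.
Qed.

Theorem mainTheorem6 (A : Type) (mul : A -> A -> A) (one zero : A)
    (R : comPzRingType) (phi : A -> R)
    (hA : sesquiad_embedding mul one zero phi)
    (C : A -> A -> Prop)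
    (hC : sesq_congruence mul one zero phi C)
    (hCfull : ~ (forall x y : A, C x y)) :
  exists P : A -> A -> Prop,
    [/\ sesq_congruence mul one zero phi P,
        (forall x y, C x y -> P x y) &
        sesq_prime mul one zero P].
Proof.
case: hC => _ _ _ [R' [f [hk hmul h1 h0 hsum]]].
have h10 : (1 : R') <> 0.
  move=> e; apply: hCfull => x y; apply/hk.
  by rewrite -[f x]mulr1 -[f y]mulr1 e !mulr0.
have [M [iM nM1 pM]] := prime_exists h10.
have [Q [pi [hker hpm hp1 hp0 hps]]] := quot_exists iM.
exists (fun x y => pi (f x) = pi (f y)); split.
- split.
  + by [].
  + by move=> x y ->.
  + by move=> x y z -> ->.
  + exists Q, (fun x => pi (f x)); split.
    * by [].
    * by move=> x y; rewrite hmul hpm.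
    * by rewrite h1 hp1.
    * by rewrite h0 hp0.
    * move=> n k a b hn hs; have := hsum n k a b hn hs.
      rewrite /sesq_sum => <-; by rewrite hps.
- by move=> x y /hk ->.
- split.
  + rewrite h1 h0 => /hker; rewrite subr0; exact: nM1.
  + move=> a b g; rewrite !hmul => /hker; rewrite -mulrBl => /pM [hab|hg].
      by left; apply/hker.
    by right; apply/hker; rewrite h0 subr0.
Qed.
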